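(* Let $0<f_1<f_2<f_3$ and consider on $M_h$ with $2h=1$ the reduced Lamé integrable system $(F_L,G_L)$, where $F_L=\ell_{12}^2+\ell_{13}^2+\ell_{14}^2$ and $G_L=f_1\ell_{34}^2+f_2\ell_{24}^2+f_3\ell_{23}^2$. The set of critical values of the momentum map $(F_L,G_L):M_h\to\mathbb R^2$ is composed of (parts of) the four straight lines $\mathfrak L_j: F_L=1-\frac{1}{f_j}G_L$ for $j=1,2,3$ and $\mathfrak L_4: F_L=0$.
   Context: $\mathbf L=(\ell_{12},\ell_{13},\ell_{14},\ell_{23},\ell_{24},\ell_{34})\in\mathbb R^6\cong\mathfrak{so}(4)^*$ with the Lie–Poisson bracket of $\mathfrak{so}(4)$ (extending $\ell_{ji}=-\ell_{ij}$: $\{\ell_{ij},\ell_{jk}\}=-\ell_{ik}$ for distinct $i,j,k$, and $\{\ell_{ij},\ell_{kl}\}=0$ when $\{i,j\}\cap\{k,l\}=\emptyset$). $M_h=\{\mathbf L:\sum_{i<j}\ell_{ij}^2=2h,\ \ell_{12}\ell_{34}-\ell_{13}\ell_{24}+\ell_{14}\ell_{23}=0\}\cong S^2\times S^2$ is a symplectic leaf. This system arises from separating the geodesic flow on $S^3$ in Lamé coordinates. *)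

(* Defs.v *)
From Stdlib Require Import Reals.
From Coquelicot Require Import Coquelicot.
Open Scope R_scope.

Record so4 := mk_so4 { l12 : R; l13 : R; l14 : R; l23 : R; l24 : R; l34 : R }.

Definition shift (p : so4) (t : R) (v : so4) : so4 :=
  mk_so4 (l12 p + t * l12 v) (l13 p + t * l13 v) (l14 p + t * l14 v)
         (l23 p + t * l23 v) (l24 p + t * l24 v) (l34 p + t * l34 v).

Definition ddir (f : so4 -> R) (p v : so4) : R :=
  Derive (fun t => f (shift p t v)) 0.

Definition Cas1 (p : so4) : R :=
  l12 p ^ 2 + l13 p ^ 2 + l14 p ^ 2 + l23 p ^ 2 + l24 p ^ 2 + l34 p ^ 2.
Definition Cas2 (p : so4) : R :=
  l12 p * l34 p - l13 p * l24 p + l14 p * l23 p.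

Definition Mh (h : R) (p : so4) : Prop := Cas1 p = 2 * h /\ Cas2 p = 0.

(* tangent space of M_h at p (M_h is a regular level set of (Cas1,Cas2)) *)
Definition tangent (p v : so4) : Prop := ddir Cas1 p v = 0 /\ ddir Cas2 p v = 0.

Definition FL (p : so4) : R := l12 p ^ 2 + l13 p ^ 2 + l14 p ^ 2.
Definition GL (f1 f2 f3 : R) (p : so4) : R :=
  f1 * l34 p ^ 2 + f2 * l24 p ^ 2 + f3 * l23 p ^ 2.

Definition critical_point (F G : so4 -> R) (h : R) (p : so4) : Prop :=
  Mh h p /\
  exists a b : R, (a <> 0 \/ b <> 0) /\
    forall v, tangent p v -> a * ddir F p v + b * ddir G p v = 0.

Definition critical_value (F G : so4 -> R) (h x y : R) : Prop :=
  exists p, critical_point F G h p /\ F p = x /\ G p = y.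

(* Main.v *)
Require Import Defs.
From Stdlib Require Import Reals Lra Psatz.
From Coquelicot Require Import Coquelicot.
Open Scope R_scope.

Lemma ddir_Cas1 p v : ddir Cas1 p v =
  2 * (l12 p * l12 v + l13 p * l13 v + l14 p * l14 v + l23 p * l23 v
       + l24 p * l24 v + l34 p * l34 v).
Proof. unfold ddir. apply is_derive_unique. unfold Cas1, shift; simpl.
  auto_derive; [trivial| ring]. Qed.

Lemma ddir_Cas2 p v : ddir Cas2 p v =
  l12 p * l34 v + l34 p * l12 v - l13 p * l24 v - l24 p * l13 v
  + l14 p * l23 v + l23 p * l14 v.
Proof. unfold ddir. apply is_derive_unique. unfold Cas2, shift; simpl.
  auto_derive; [trivial| ring]. Qed.

Lemma ddir_FL p v : ddir FL p v =
  2 * (l12 p * l12 v + l13 p * l13 v + l14 p * l14 v).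
Proof. unfold ddir. apply is_derive_unique. unfold FL, shift; simpl.
  auto_derive; [trivial| ring]. Qed.

Lemma ddir_GL f1 f2 f3 p v : ddir (GL f1 f2 f3) p v =
  2 * (f1 * l34 p * l34 v + f2 * l24 p * l24 v + f3 * l23 p * l23 v).
Proof. unfold ddir. apply is_derive_unique. unfold GL, shift; simpl.
  auto_derive; [trivial| ring]. Qed.

Lemma cancel_l c e : c <> 0 -> c * e = 0 -> e = 0.
Proof. intros Hc H. destruct (Rmult_integral _ _ H); [contradiction|assumption]. Qed.

Ltac tang := split; [rewrite ddir_Cas1 | rewrite ddir_Cas2]; simpl; ring.

Theorem proposition6 (f1 f2 f3 : R) :
  0 < f1 -> f1 < f2 -> f2 < f3 ->
  (forall x y : R, critical_value FL (GL f1 f2 f3) (/ 2) x y ->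
     x = 1 - y / f1 \/ x = 1 - y / f2 \/ x = 1 - y / f3 \/ x = 0) /\
  (exists x y, critical_value FL (GL f1 f2 f3) (/ 2) x y /\ x = 1 - y / f1) /\
  (exists x y, critical_value FL (GL f1 f2 f3) (/ 2) x y /\ x = 1 - y / f2) /\
  (exists x y, critical_value FL (GL f1 f2 f3) (/ 2) x y /\ x = 1 - y / f3) /\
  (exists x y, critical_value FL (GL f1 f2 f3) (/ 2) x y /\ x = 0).
Proof.
  intros h1 h2 h3.
  assert (Hw0 : critical_point FL (GL f1 f2 f3) (/2) (mk_so4 1 0 0 0 0 0)).
  { split. split; unfold Cas1, Cas2; simpl; field.
    exists 0, 1. split. right; lra. intros v _.
    rewrite ddir_FL, ddir_GL; simpl; ring. }
  assert (Hu0 : critical_point FL (GL f1 f2 f3) (/2) (mk_so4 0 0 0 0 0 1)).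
  { split. split; unfold Cas1, Cas2; simpl; field.
    exists 1, 0. split. left; lra. intros v _.
    rewrite ddir_FL, ddir_GL; simpl; ring. }
  assert (Ew : forall j, 0 < j -> exists x y, critical_value FL (GL f1 f2 f3) (/ 2) x y /\ x = 1 - y / j).
  { intros j hj. exists 1, 0. split. exists (mk_so4 1 0 0 0 0 0). split; [exact Hw0|].
    unfold FL, GL; simpl; split; ring. field. lra. }
  split; [| split; [apply Ew; lra | split; [apply Ew; lra | split; [apply Ew; lra|]]]].
  2:{ exists 0, f1. split; [|reflexivity]. exists (mk_so4 0 0 0 0 0 1). split; [exact Hu0|].
      unfold FL, GL; simpl; split; ring. }
  intros x y [p [[[C1 C2] [a [b [hab H]]]] [Fx Gy]]].
  unfold Cas1, Cas2 in C1, C2. unfold FL in Fx. unfold GL in Gy.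
  destruct p as [p12 p13 p14 p23 p24 p34]; simpl in *.
  pose proof (H (mk_so4 0 (-p14) p13 (-p24) p23 0)) as R1.
  pose proof (H (mk_so4 p14 0 (-p12) (-p34) 0 p23)) as R2.
  pose proof (H (mk_so4 (-p13) p12 0 0 (-p34) p24)) as R3.
  pose proof (H (mk_so4 0 (-p23) (-p24) p13 p14 0)) as B1.
  pose proof (H (mk_so4 p23 0 (-p34) (-p12) 0 p14)) as B2.
  pose proof (H (mk_so4 p24 p34 0 0 (-p12) (-p13))) as B3.
  clear H.
  rewrite ddir_FL, ddir_GL in R1, R2, R3, B1, B2, B3; simpl in *.
  specialize (R1 ltac:(tang)). specialize (R2 ltac:(tang)). specialize (R3 ltac:(tang)).
  specialize (B1 ltac:(tang)). specialize (B2 ltac:(tang)). specialize (B3 ltac:(tang)).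
  destruct (Req_dec b 0) as [Hb|Hb].
  - subst b. destruct hab as [Ha|Ha]; [|lra].
    assert (K1 : p13*p14 * 0 + (p14 * (- p24) - p13 * p23) = 0 \/ True) by (right; exact I).
    clear K1.
    assert (E1 : - p13 * p23 - p14 * p24 = 0).
    { apply (cancel_l (2*a)); [intro; apply Ha; lra| lra]. }
    assert (E2 : p12 * p23 - p14 * p34 = 0).
    { apply (cancel_l (2*a)); [intro; apply Ha; lra| lra]. }
    assert (E3 : p12 * p24 + p13 * p34 = 0).
    { apply (cancel_l (2*a)); [intro; apply Ha; lra| lra]. }
    assert (P : (p12^2+p13^2+p14^2) * (p23^2+p24^2+p34^2) = 0).
    { replace ((p12^2+p13^2+p14^2) * (p23^2+p24^2+p34^2)) with
        ((- p13 * p23 - p14 * p24)^2 + (p12 * p23 - p14 * p34)^2 + (p12 * p24 + p13 * p34)^2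
         + (p12 * p34 - p13 * p24 + p14 * p23)^2) by ring.
      rewrite E1, E2, E3, C2. ring. }
    apply Rmult_integral in P. destruct P as [P|P].
    + right; right; right. rewrite <- Fx. rewrite <- P. ring.
    + left. assert (p23 = 0) by nra. assert (p24 = 0) by nra. assert (p34 = 0) by nra.
      subst p23 p24 p34. assert (Hy : y / f1 = 0) by (rewrite <- Gy; field; lra); rewrite Hy; ring_simplify in C1; ring_simplify in Fx; lra.
  - assert (W1 : p24 * p23 = 0).
    { apply (cancel_l (2*b*(f3-f2))); [apply Rmult_integral_contrapositive; split; [apply Rmult_integral_contrapositive; split|]; lra| lra]. }
    assert (W2 : p34 * p23 = 0).
    { apply (cancel_l (2*b*(f3-f1))); [apply Rmult_integral_contrapositive; split; [apply Rmult_integral_contrapositive; split|]; lra| lra]. }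
    assert (W3 : p34 * p24 = 0).
    { apply (cancel_l (2*b*(f2-f1))); [apply Rmult_integral_contrapositive; split; [apply Rmult_integral_contrapositive; split|]; lra| lra]. }
    destruct (Req_dec p34 0) as [Z1|Z1].
    + destruct (Req_dec p24 0) as [Z2|Z2].
      * right; right; left. subst p34 p24. assert (Hy : y / f3 = (p23^2)) by (rewrite <- Gy; field; lra); rewrite Hy; ring_simplify in C1; ring_simplify in Fx; lra.
      * assert (p23 = 0) by (apply (cancel_l p24); [assumption|lra]).
        right; left. subst p34 p23. assert (Hy : y / f2 = (p24^2)) by (rewrite <- Gy; field; lra); rewrite Hy; ring_simplify in C1; ring_simplify in Fx; lra.
    + assert (p23 = 0) by (apply (cancel_l p34); [assumption|lra]).
      assert (p24 = 0) by (apply (cancel_l p34); [assumption|lra]).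
      left. subst p23 p24. assert (Hy : y / f1 = (p34^2)) by (rewrite <- Gy; field; lra); rewrite Hy; ring_simplify in C1; ring_simplify in Fx; lra.
Qed.
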